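(* For every $n \geq 2$ and every $i \in \{1,\ldots,n\}$, if the set of arrangements in $\{d_{n1}\}$ with first entry $i$ is nonempty, then it has exactly $Der_{n-2}$ elements.
   Context: A linear arrangement of $\{1,\ldots,n\}$ is a sequence $a_1\cdots a_n$ in which each of $1,\ldots,n$ appears exactly once. It contains the pattern $ij$ if $a_t=i$ and $a_{t+1}=j$ for some $t$; otherwise it avoids it. $\{d_{n1}\}$ is the set of linear arrangements of $\{1,\ldots,n\}$ that avoid all of the patterns $12, 23, \ldots, (n-1)n$ and contain the pattern $n1$. $Der_m$ is the number of permutations of $\{1,\ldots,m\}$ with no fixed point ($Der_0=1$). *)

(* Defs.v *)
From mathcomp Require Import all_boot all_fingroup.
Set Implicit Arguments. Unset Strict Implicit. Unset Printing Implicit Defensive.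

Definition is_arrangement (n : nat) (s : seq nat) : bool :=
  perm_eq s (iota 1 n).

Definition contains_pat (s : seq nat) (i j : nat) : bool :=
  (i, j) \in zip s (behead s).

Definition in_dn1 (n : nat) (s : seq nat) : bool :=
  [&& is_arrangement n s,
      all (fun k => ~~ contains_pat s k k.+1) (iota 1 n.-1)
    & contains_pat s n 1].

Definition dn1_first (n i : nat) : seq nat -> bool :=
  fun s => in_dn1 n s && (head 0 s == i).

Definition Der (m : nat) : nat :=
  #|[set s : {perm 'I_m} | [forall x, s x != x]]|.

(* Main.v *)
Require Import Defs.
From mathcomp Require Import all_boot all_fingroup zify.
Set Implicit Arguments. Unset Strict Implicit. Unset Printing Implicit Defensive.

Definition avoid (w : seq nat) (E : seq (nat * nat)) : bool :=
  all (fun p => ~~ contains_pat w p.1 p.2) E.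

Definition cnt (X : seq nat) (s : nat) (E : seq (nat * nat)) : nat :=
  count (fun w => (head 0 w == s) && avoid w E) (permutations X).

Definition cntC (X : seq nat) (s u v : nat) (E : seq (nat * nat)) : nat :=
  count (fun w => [&& head 0 w == s, contains_pat w u v & avoid w E]) (permutations X).

Definition ctr (u v : nat) (p : nat * nat) : nat * nat :=
  if p.1 == v then (u, p.2) else p.

Fixpoint ins (u v : nat) (w : seq nat) : seq nat :=
  if w is x :: t then (if x == u then u :: v :: t else x :: ins u v t) else [::].

Lemma cp_cons x t y z :
  contains_pat (x :: t) y z = (if t is a :: _ then ((y, z) == (x, a)) else false)
                               || contains_pat t y z.
Proof. by case: t => [|a t] //=; rewrite /contains_pat /= in_cons. Qed.

Lemma cp_mem1 w y z : contains_pat w y z -> y \in w.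
Proof.
elim: w => [|x t IH] //; rewrite cp_cons in_cons.
case: t IH => [|a t] IH; first by [].
case/orP => [/eqP [-> _]|/IH ->]; first by rewrite eqxx.
by rewrite orbT.
Qed.

Lemma cp_mem2 w y z : contains_pat w y z -> z \in behead w.
Proof.
elim: w => [|x t IH] //; rewrite cp_cons /=.
case: t IH => [|a t] IH; first by [].
case/orP => [/eqP [_ ->]|/IH]; first by rewrite in_cons eqxx.
by move=> /= H; rewrite in_cons H orbT.
Qed.

Lemma cp_decomp w u v : contains_pat w u v -> exists a b, w = a ++ u :: v :: b.
Proof.
elim: w => [|x t IH] //; rewrite cp_cons.
case: t IH => [|a t] IH; first by [].
case/orP => [/eqP [-> ->]|/IH [a' [b ->]]]; first by exists [::], t.
by exists (x :: a'), b.
Qed.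

Lemma mem_decomp (w : seq nat) (u : nat) : u \in w -> exists a b, w = a ++ u :: b /\ u \notin a.
Proof.
elim: w => [|x t IH] //; rewrite in_cons.
case: (eqVneq u x) => [-> _|nux /= /IH [a [b [-> nua]]]]; first by exists [::], t.
by exists (x :: a), b; rewrite in_cons negb_or nux.
Qed.

Lemma cp_mid (a b : seq nat) (u v : nat) : contains_pat (a ++ u :: v :: b) u v.
Proof.
elim: a => [|x a IH]; first by rewrite cp_cons eqxx.
by rewrite /= cp_cons IH orbT.
Qed.

Lemma head_mid (a b : seq nat) (u v : nat) : head 0 (a ++ u :: v :: b) = head 0 (a ++ u :: b).
Proof. by case: a. Qed.

Lemma rem_mid (a b : seq nat) (u v : nat) : v \notin a -> u != v -> rem v (a ++ u :: v :: b) = a ++ u :: b.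
Proof.
move=> nva nuv; elim: a nva => [|x a IH] /=.
  by rewrite (negbTE nuv) /= eqxx.
rewrite in_cons negb_or => /andP [nvx /IH ->].
by rewrite eq_sym in nvx; rewrite (negbTE nvx).
Qed.

Lemma ins_mid (a b : seq nat) (u v : nat) : u \notin a -> ins u v (a ++ u :: b) = a ++ u :: v :: b.
Proof.
elim: a => [|x a IH] /=; first by rewrite eqxx.
rewrite in_cons negb_or => /andP [nux /IH ->].
by rewrite eq_sym (negbTE nux).
Qed.

Lemma key1 (a b : seq nat) (u v x y : nat) : x != u -> x != v ->
  contains_pat (a ++ u :: b) x y = contains_pat (a ++ u :: v :: b) x y.
Proof.
move=> nxu nxv; elim: a => [|c a IH].
  rewrite /= !cp_cons; case: b => [|d b]; rewrite ?xpair_eqE ?(negbTE nxu) ?(negbTE nxv) //=.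
  idtac.
rewrite /= (cp_cons c (a ++ u :: b)) (cp_cons c (a ++ u :: v :: b)) IH.
by case: a {IH}.
Qed.

Lemma key2 (a b : seq nat) (u v y : nat) : uniq (a ++ u :: v :: b) ->
  contains_pat (a ++ u :: b) u y = contains_pat (a ++ u :: v :: b) v y.
Proof.
elim: a => [|c a IH].
  rewrite /= !in_cons negb_or => /and3P [/andP [nuv nub] nvb _].
  rewrite !cp_cons xpair_eqE eq_sym (negbTE nuv) /=.
  case: b nub nvb => [|d b] nub nvb //=.
  rewrite (_ : contains_pat (d :: b) u y = false); last first.
    by apply/negP => /cp_mem1; apply/negP.
  rewrite (_ : contains_pat (d :: b) v y = false); last first.
    by apply/negP => /cp_mem1; apply/negP.
  by rewrite !xpair_eqE !eqxx.
rewrite cat_cons cons_uniq => /andP [Hc U].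
have ncu : c != u by apply: contraNneq Hc => ->; rewrite mem_cat in_cons eqxx orbT.
have ncv : c != v by apply: contraNneq Hc => ->; rewrite mem_cat !in_cons eqxx !orbT.
rewrite (cp_cons c (a ++ u :: b)) (cp_cons c (a ++ u :: v :: b)) (IH U).
case: a {IH U Hc} => [|d a] /=; rewrite !xpair_eqE.
  by rewrite (eq_sym u c) (negbTE ncu) (eq_sym v c) (negbTE ncv).
by rewrite (eq_sym u c) (negbTE ncu) (eq_sym v c) (negbTE ncv).
Qed.

Lemma avoid_mid (a b : seq nat) (u v : nat) E1 : uniq (a ++ u :: v :: b) ->
  (forall p, p \in E1 -> (p.1 != u) && (p.2 != v)) ->
  avoid (a ++ u :: b) (map (ctr u v) E1) = avoid (a ++ u :: v :: b) E1.
Proof.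
move=> U HE; rewrite /avoid all_map; apply: eq_in_all => p /HE /andP [h1 h2].
rewrite /ctr /=; case: eqP => [e|/eqP ne] /=.
  by rewrite e (key2 p.2 U).
by rewrite (@key1 a b u v p.1 p.2 h1 ne).
Qed.

Lemma perm_rem_both (w X : seq nat) v : v \in X -> perm_eq w X -> perm_eq (rem v w) (rem v X).
Proof.
move=> vX pwX; have vw : v \in w by rewrite (perm_mem pwX).
rewrite -(perm_cons v); apply: perm_trans (perm_to_rem vX).
apply: perm_trans pwX; rewrite perm_sym; exact: perm_to_rem.
Qed.

Lemma notin_pre (a c : seq nat) x : uniq (a ++ c) -> x \in c -> x \notin a.
Proof.
rewrite cat_uniq => /and3P [_ H _] xc; apply/negP => xa.
by move/hasPn: H => /(_ x xc); rewrite /= xa.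
Qed.

Lemma contraction (X : seq nat) s u v E1 :
  uniq X -> u \in X -> v \in X -> u != v -> v != s ->
  (forall p, p \in E1 -> (p.1 != u) && (p.2 != v)) ->
  cntC X s u v E1 = cnt (rem v X) s (map (ctr u v) E1).
Proof.
move=> UX uX vX nuv nvs HE.
rewrite /cntC /cnt -!size_filter.
set L1 := filter _ _; set L2 := filter _ _.
have inL1 : forall w, w \in L1 -> exists a b, [/\ w = a ++ u :: v :: b, uniq w,
     perm_eq w X, head 0 w == s & avoid w E1].
  move=> w; rewrite mem_filter mem_permutations => /andP [/and3P [hs cuv av] pw].
  have [a [b ew]] := cp_decomp cuv.
  by exists a, b; split=> //; rewrite (perm_uniq pw).
have remK : {in L1, cancel (rem v) (ins u v)}.
  move=> w /inL1 [a [b [ew Uw _ _ _]]].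
  have nva : v \notin a by apply: (notin_pre (c := u :: v :: b)); rewrite -?ew // !in_cons eqxx orbT.
  have nua : u \notin a by apply: (notin_pre (c := u :: v :: b)); rewrite -?ew // !in_cons eqxx.
  by rewrite ew rem_mid // ins_mid.
have -> : size L1 = size (map (rem v) L1) by rewrite size_map.
apply: perm_size; apply: uniq_perm.
- rewrite map_inj_in_uniq; first by rewrite filter_uniq // permutations_uniq.
  exact: can_in_inj remK.
- by rewrite filter_uniq // permutations_uniq.
move=> w'; apply/mapP/idP.
  case=> w /inL1 [a [b [ew Uw pw hs av]]] ->.
  have nva : v \notin a by apply: (notin_pre (c := u :: v :: b)); rewrite -?ew // !in_cons eqxx orbT.
  rewrite mem_filter mem_permutations.
  have -> : rem v w = a ++ u :: b by rewrite ew rem_mid.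
  rewrite -(head_mid a b u v) -ew hs /=.
  have := perm_rem_both vX pw; rewrite ew rem_mid // => -> ; rewrite andbT.
  by rewrite avoid_mid -?ew.
rewrite mem_filter mem_permutations => /andP [/andP [hs av] pw'].
have uw' : u \in w' by rewrite (perm_mem pw') mem_rem_uniq // inE nuv uX.
have [a [b [ew' nua]]] := mem_decomp uw'.
have vw' : v \notin w' by rewrite (perm_mem pw') mem_rem_uniqF.
have nva : v \notin a by apply: contra vw'; rewrite ew' mem_cat => ->.
have pw : perm_eq (a ++ u :: v :: b) X.
  apply: (@perm_trans _ (v :: rem v X)); last by rewrite perm_sym perm_to_rem.
  have -> : a ++ u :: v :: b = (a ++ [:: u]) ++ [:: v] ++ b by rewrite -catA.
  by rewrite perm_catCA /= perm_cons -catA /= -ew'.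
have Uw : uniq (a ++ u :: v :: b) by rewrite (perm_uniq pw).
exists (a ++ u :: v :: b); last by rewrite rem_mid // ew'.
rewrite mem_filter mem_permutations pw andbT head_mid -ew' hs cp_mid /=.
by rewrite -avoid_mid // -ew'.
Qed.

Fixpoint Fn (k e : nat) : nat :=
  if e is e'.+1 then Fn k e' - Fn k.-1 e' else k`!.

Lemma count_split (T : eqType) (a b : pred T) (l : seq T) :
  count (fun x => a x && ~~ b x) l + count (fun x => a x && b x) l = count a l.
Proof.
elim: l => //= x l IH; rewrite -IH; case: (a x); case: (b x) => /=; lia.
Qed.

Lemma cnt_split X s u v E1 :
  cnt X s ((u, v) :: E1) + cntC X s u v E1 = cnt X s E1.
Proof.
rewrite /cnt /cntC -(count_split (fun w => (head 0 w == s) && avoid w E1) (fun w => contains_pat w u v)).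
congr (_ + _); apply: eq_count => w /=; rewrite /avoid /=.
  by case: (head 0 w == s); case: (contains_pat w u v); case: all.
by case: (head 0 w == s); case: (contains_pat w u v); case: all.
Qed.

Lemma cnt_base (X : seq nat) s : uniq X -> s \in X -> cnt X s [::] = (size X).-1`!.
Proof.
move=> UX sX; rewrite /cnt -size_filter.
rewrite -(size_rem sX) -size_permutations ?rem_uniq //.
rewrite -(size_map (cons s)).
apply: perm_size; apply: uniq_perm.
- by rewrite filter_uniq // permutations_uniq.
- by rewrite map_inj_uniq ?permutations_uniq // => x y [].
move=> w; rewrite mem_filter mem_permutations /avoid /= andbT.
apply/idP/mapP.
  case: w => [|x t] /=.
    by move=> /andP [/eqP s0]; rewrite perm_sym => /perm_nilP X0; rewrite X0 in sX.
  case/andP => /eqP -> pw; exists t => //.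
  by rewrite mem_permutations -(perm_cons s); apply: perm_trans pw _; apply: perm_to_rem.
case=> t; rewrite mem_permutations => pt -> /=; rewrite eqxx /=.
apply: (@perm_trans _ (s :: rem s X)); first by rewrite perm_cons.
by rewrite perm_sym perm_to_rem.
Qed.

Lemma cntA (r : nat -> nat) n : forall (E : seq (nat * nat)) (X : seq nat) s,
  size E = n -> uniq X -> s \in X ->
  (forall p, p \in E -> [&& p.1 \in X, p.2 \in X, r p.1 < r p.2 & p.2 != s]) ->
  uniq (map fst E) -> uniq (map snd E) -> cnt X s E = Fn (size X).-1 (size E).
Proof.
elim: n => [|n IH] [|[u v] E1] // X s /= Hn UX sX HE U1 U2; first by rewrite cnt_base.
case: Hn => Hn.
have /= /and4P [uX vX ruv nvs] := HE (u, v) (mem_head _ _).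
have nuv : u != v by apply: contraTneq ruv => ->; rewrite ltnn.
move: U1 U2 => /= /andP [nu1 U1] /andP [nv2 U2].
have HE1 : forall p, p \in E1 -> [&& p.1 \in X, p.2 \in X, r p.1 < r p.2 & p.2 != s].
  by move=> p pE; apply: HE; rewrite in_cons pE orbT.
have H1 := IH E1 X s Hn UX sX HE1 U1 U2.
have HE1' : forall p, p \in E1 -> (p.1 != u) && (p.2 != v).
  move=> p pE; apply/andP; split.
    by apply: contraNneq nu1 => <-; apply: map_f.
  by apply: contraNneq nv2 => <-; apply: map_f.
have H2 := contraction UX uX vX nuv nvs HE1'.
have Hsz : size (rem v X) = (size X).-1 by rewrite size_rem.
have H3 : cnt (rem v X) s (map (ctr u v) E1) = Fn (size X).-1.-1 (size E1).
  rewrite -Hsz -(size_map (ctr u v) E1); apply: IH; first by rewrite size_map.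
  - exact: rem_uniq.
  - by rewrite mem_rem_uniq // inE eq_sym nvs sX.
  - move=> p' /mapP [p pE ->]; have /and4P [p1X p2X rp nps] := HE1 p pE.
    have /andP [p1u p2v] := HE1' p pE.
    rewrite /ctr; case: eqP => [e|/eqP ne] /=.
    + rewrite !mem_rem_uniq // !inE nuv uX p2v p2X nps /= andbT.
      by apply: ltn_trans ruv _; rewrite -e.
    + by rewrite !mem_rem_uniq // !inE ne p1X p2v p2X rp nps.
  - rewrite -map_comp (eq_map (g := fun p => if p.1 == v then u else p.1)); last first.
      by move=> p /=; rewrite /ctr; case: eqP.
    rewrite (map_comp (fun x => if x == v then u else x) fst) map_inj_in_uniq //.
    move=> x y xE yE /=; case: eqP => [-> |nxv]; case: eqP => [-> |nyv] //.
    + by move=> yu; rewrite yu yE in nu1.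
    + by move=> xu; rewrite -xu xE in nu1.
  - rewrite -map_comp (eq_map (g := snd)) //.
    by move=> p /=; rewrite /ctr; case: eqP.
have := cnt_split X s u v E1; rewrite H2 H1 H3 /= => <-.
by rewrite Hn addnK.
Qed.
Definition dcnt (T : finType) (F : {set T}) :=
  #|[set s : {perm T} | [forall x in F, s x != x]]|.

Section Ext.
Variables (T : finType) (x : T).
Definition T' := {y : T | y != x}.

Definition extf (s : {perm T'}) (z : T) : T :=
  if insub z is Some y then val (s y) else x.

Lemma extf_inj s : injective (extf s).
Proof.
move=> z1 z2; rewrite /extf.
case: insubP => [y1 _ e1|n1]; case: insubP => [y2 _ e2|n2] //.
- by move/val_inj/perm_inj => e; rewrite -e1 -e2 e.
- by move=> e; move: (valP (s y1)); rewrite e eqxx.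
- by move=> e; move: (valP (s y2)); rewrite -e eqxx.
- by move: n1 n2; rewrite !negbK => /eqP -> /eqP ->.
Qed.

Definition ext (s : {perm T'}) : {perm T} := perm (@extf_inj s).

Lemma ext_x s : ext s x = x.
Proof. by rewrite permE /extf insubF // eqxx. Qed.

Lemma ext_val s (y : T') : ext s (val y) = val (s y).
Proof. by rewrite permE /extf valK. Qed.

Lemma ext_inj : injective ext.
Proof.
move=> s1 s2 e; apply/permP => y; apply: val_inj.
by rewrite -!ext_val e.
Qed.

Lemma card_T' : #|{: T'}| = #|T|.-1.
Proof. by rewrite card_sig -(cardC1 x); apply: eq_card. Qed.

End Ext.

Lemma cntB e : forall (T : finType) (F : {set T}), #|F| = e -> dcnt F = Fn #|T| e.
Proof.
elim: e => [|e IH] T F HF.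
  have -> : F = set0 by apply/eqP; rewrite -cards_eq0 HF.
  rewrite /dcnt /=.
  rewrite (eq_card (B := perm_on [set: T])); first by rewrite card_perm cardsT.
  move=> s; rewrite inE [s \in perm_on _]unfold_in /perm_on.
  have -> : [pred x | s x != x] \subset [set: T] by apply/subsetP => y; rewrite in_setT.
  by apply/forallP => y; rewrite inE.
have [x xF] : exists x, x \in F by apply/set0Pn; rewrite -card_gt0 HF.
set F1 := F :\ x.
have HF1 : #|F1| = e by move: HF; rewrite (cardsD1 x F) xF => -[].
set A := [set s : {perm T} | [forall y in F1, s y != y]].
set B := [set s : {perm T} | s x == x].
have HA : #|A| = Fn #|T| e by rewrite -(IH T F1 HF1).
have HD : dcnt F = #|A :\: B|.
  rewrite /dcnt; apply: eq_card => s; rewrite !inE.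
  apply/forallP/andP => [H|[nB /forallP H] y].
    split; first by have := H x; rewrite xF.
    apply/forallP => y; apply/implyP; rewrite !inE => /andP [_ yF].
    by have := H y; rewrite yF.
  apply/implyP => yF; case: (eqVneq y x) => [->|nyx] //.
  by have := H y; rewrite !inE nyx yF.
have HI : #|A :&: B| = Fn #|T|.-1 e.
  set F1' := [set y : T' x | val y \in F1].
  have HF1' : #|F1'| = e.
    rewrite -HF1 -(card_imset _ val_inj); apply: eq_card => z.
    apply/imsetP/idP => [[y]|zF1]; first by rewrite inE => yF ->.
    have zx : z != x by move: zF1; rewrite /F1 in_setD1 => /andP [].
    exists (Sub z zx : T' x); last by rewrite SubK.
    by rewrite inE SubK.
  rewrite -(card_T' x) -(IH _ F1' HF1') /dcnt -(card_imset _ (@ext_inj T x)).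
  apply: eq_card => s; apply/idP/imsetP.
    rewrite !inE => /andP [/forallP H /eqP sx].
    have sv : forall y : T' x, s (val y) != x.
      move=> y; apply/eqP => ee; have := valP y.
      by rewrite (perm_inj (etrans ee (esym sx))) eqxx.
    have f_inj : injective (fun y : T' x => Sub (s (val y)) (sv y) : T' x).
      by move=> y1 y2 /(congr1 val) /= /perm_inj /val_inj.
    exists (perm f_inj).
      rewrite inE; apply/forallP => y; apply/implyP; rewrite inE => yF.
      rewrite permE; apply: contra_neq (implyP (H (val y)) yF).
      by move/(congr1 val).
    apply/permP => z; case: (eqVneq z x) => [->|nzx]; first by rewrite ext_x.
    by rewrite (_ : z = val (Sub z nzx : T' x)) // ext_val permE.
  case=> s'; rewrite inE => /forallP H ->.
  rewrite !inE ext_x eqxx andbT; apply/forallP => y; apply/implyP => yF.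
  have yx : y != x by move: yF; rewrite !inE => /andP [].
  rewrite (_ : y = val (Sub y yx : T' x)) // ext_val.
  apply: contra_neq (implyP (H (Sub y yx)) _); last by rewrite inE.
  exact: val_inj.
have := cardsID B A; rewrite HI HA -HD => H /=.
by rewrite -H addKn.
Qed.

Lemma Der_Fn m : Der m = Fn m m.
Proof.
have := @cntB m _ [set: 'I_m]; rewrite cardsT card_ord => /(_ erefl) <-.
rewrite /dcnt; apply: eq_card => s; rewrite !inE.
by apply: eq_forallb => y; rewrite in_setT.
Qed.

Lemma cnt_drop_in (X : seq nat) s E : uniq X -> cnt X s E = cnt X s (filter (fun p => p.2 != s) E).
Proof.
move=> UX; apply: eq_in_count => w; rewrite mem_permutations => pw.
case: eqP => //= hs; rewrite /avoid all_filter; apply: eq_all => p /=.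
case: eqP => [e|_] //=.
have Uw : uniq w by rewrite (perm_uniq pw).
case: w pw Uw hs => [|x t] //= _ /andP [xt _] hx; rewrite e -hx.
by apply/negP => /cp_mem2 /= xt'; rewrite xt' in xt.
Qed.

Theorem lemma4p8 (n i : nat) :
  2 <= n -> 1 <= i <= n ->
  [seq s <- permutations (iota 1 n) | dn1_first n i s] != [::] ->
  size [seq s <- permutations (iota 1 n) | dn1_first n i s] = Der (n - 2).
Proof.
move=> n2 /andP [i1 iN] ne.
have i_ne1 : i != 1.
  apply: contraNneq ne => ->.
  rewrite -size_eq0 size_filter eqn0Ngt -has_count; apply/hasPn => w.
  rewrite mem_permutations => pw.
  apply/negP; rewrite /dn1_first /in_dn1 => /andP [/and3P [_ _ c] /eqP h].
  have U : uniq w by rewrite (perm_uniq pw) iota_uniq.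
  case: w pw U c h => [|x t] //= _ /andP [xt _] c h.
  by move: (cp_mem2 c) => /= t1; rewrite h t1 in xt.
rewrite size_filter.
set X := iota 1 n.
set E0 := [seq (k, k.+1) | k <- iota 1 n.-1].
have -> : count (dn1_first n i) (permutations X) = cntC X i n 1 E0.
  apply: eq_in_count => w; rewrite mem_permutations => pw.
  rewrite /dn1_first /in_dn1 /is_arrangement pw /avoid all_map /=.
  by case: (head 0 w == i); case: (contains_pat w n 1); rewrite ?andbT ?andbF.
have UX : uniq X by exact: iota_uniq.
have memX : forall x, (x \in X) = (1 <= x < n.+1) by move=> x; rewrite mem_iota add1n.
have uX : n \in X by rewrite memX; apply/andP; split; lia.
have vX : 1 \in X by rewrite memX; apply/andP; split; lia.
have nuv : n != 1 by apply/eqP; lia.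
have nvs : 1 != i by rewrite eq_sym.
have HE0 : forall p, p \in E0 -> (p.1 != n) && (p.2 != 1).
  move=> p /mapP [k]; rewrite mem_iota => /andP [k1 kn] -> /=; apply/andP; split.
  + apply/eqP; lia.
  + apply/eqP; lia.
rewrite (contraction UX uX vX nuv nvs HE0).
rewrite cnt_drop_in; last by rewrite rem_uniq.
set X' := rem 1 X.
set E' := filter _ _.
have UX' : uniq X' by rewrite rem_uniq.
have memX' : forall x, (x \in X') = (2 <= x < n.+1).
  move=> x; rewrite mem_rem_uniq // inE memX.
  case: (eqVneq x 1) => [->|nx1] //=; lia.
have szX' : size X' = n.-1 by rewrite size_rem ?size_iota // memX.
set r := fun x => if i <= x then x - i else x + n.
have memE' : forall p, p \in E' -> exists k, [/\ 1 <= k < n, k.+1 != i &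
    p = if k == 1 then (n, k.+1) else (k, k.+1)].
  move=> p; rewrite mem_filter => /andP [p2 /mapP [q /mapP [k kin ->] pe]].
  move: kin p2; rewrite pe mem_iota add1n => /andP [k1 kn] p2; exists k.
  rewrite /ctr /=; split; first by apply/andP; split; lia.
    by move: p2; rewrite /ctr /=; case: (k == 1) => /= ->.
  by case: eqP.
have szE' : size E' = n - 2.
  rewrite size_filter /E0 -!map_comp count_map.
  rewrite (eq_count (a2 := fun k => k.+1 != i)); last first.
    by move=> k /=; rewrite /ctr /=; case: (k == 1).
  have := count_predC (fun k => k.+1 == i) (iota 1 n.-1).
  rewrite size_iota.
  have -> : count (fun k => k.+1 == i) (iota 1 n.-1) = 1.
    rewrite -(count_map succn (pred1 i)).
    have -> : map succn (iota 1 n.-1) = iota 2 n.-1.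
      by rewrite (iotaDl 1 1); apply: eq_map => k; rewrite add1n.
    rewrite count_uniq_mem ?iota_uniq // mem_iota.
    by have -> : (2 <= i < 2 + n.-1) = true by apply/andP; split; lia.
  have -> : count (predC (fun k => k.+1 == i)) (iota 1 n.-1) = count (fun k => k.+1 != i) (iota 1 n.-1) by [].
  lia.
have sX' : i \in X'.
  by rewrite memX'; apply/andP; split; lia.
have HE' : forall p, p \in E' -> [&& p.1 \in X', p.2 \in X', r p.1 < r p.2 & p.2 != i].
  move=> p /memE' [k [/andP [k1 kn] ki ->]].
  case: (eqVneq k 1) => [k1e|kn1] /=.
  + rewrite !memX' /r; subst k.
    have i2 : 2 < i by move: ki; rewrite /=; move=> /eqP ki; lia.
    have -> : (i <= n) = true by apply/idP; lia.
    have -> : (i <= 2) = false by apply/negbTE; rewrite -ltnNge.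
    rewrite ki !andbT; apply/and3P; split; apply/idP; lia.
  + rewrite !memX' /r ki andbT.
    have k2 : 2 <= k by lia.
    apply/and3P; split; first (apply/idP; lia); first (apply/idP; lia).
    case: (leqP i k) => ik; case: (leqP i k.+1) => ik1; try lia.
have U1 : uniq (map fst E').
  apply: subseq_uniq (map_subseq _ (filter_subseq _ _)) _.
  rewrite /E0 -!map_comp (eq_map (g := fun k => if k == 1 then n else k)); last first.
    by move=> k /=; rewrite /ctr /=; case: (k == 1).
  rewrite map_inj_in_uniq ?iota_uniq // => x y; rewrite !mem_iota add1n.
  move=> /andP [x1 xn] /andP [y1 yn].
  case: eqP => [ex|nx]; case: eqP => [ey|ny] //; lia.
have U2 : uniq (map snd E').
  apply: subseq_uniq (map_subseq _ (filter_subseq _ _)) _.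
  rewrite /E0 -!map_comp (eq_map (g := succn)); last first.
    by move=> k /=; rewrite /ctr /=; case: (k == 1).
  by rewrite map_inj_uniq ?iota_uniq //; exact: succn_inj.
rewrite (cntA szE' UX' sX' HE' U1 U2).
rewrite szX' Der_Fn; congr Fn.
  by case: (n) n2 => [|[|m]] //= _; rewrite subn2.
exact: szE'.
Qed.
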